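(* Let $\bowtie$ be a balanced coloring of a network $\mathcal{G}$. Then for any choice of node spaces there exists a $\mathcal{G}$-admissible map $f$ such that the ODE $\dot x=f(x)$ has a linearly stable equilibrium with synchrony pattern $\bowtie$.
   Context: A network $\mathcal{G}$ has a finite set of nodes $\mathcal{C}$, each with a node type, and a finite set of arrows, each with an arrow type, a head and a tail; the input set $I(c)$ of node $c$ is the set of arrows with head $c$. Nodes $c,d$ are input equivalent if they have the same node type and there is an arrow-type-preserving bijection $I(c)\to I(d)$. Each node $c$ has a node space $P_c$ (a finite-dimensional real vector space), with $P_c=P_d$ when $c,d$ are input equivalent, and the phase space is $P=\prod_c P_c$. A map $f=(f_c):P\to P$ is $\mathcal{G}$-admissible if each $f_c(x)$ depends only on $x_c$ and the tail variables $x_{t(a)}$, $a\in I(c)$, via a function that is invariant under permutations of inputs preserving arrow type, and input-equivalent nodes use the same function (after identifying inputs by an arrow-type-preserving bijection). A coloring (equivalence relation) $\bowtie$ of the nodes is balanced if same-colored nodes $c,d$ are input equivalent via a bijection $\beta:I(c)\to I(d)$ such that the tails of $a$ and $\beta(a)$ have the same color for every $a$. An equilibrium $y$ has synchrony pattern $\bowtie$ if $y_c=y_d$ exactly when $c,d$ have the same color. It is linearly stable if all eigenvalues of the Jacobian at $y$ have negative real part. *)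

(* Defs.v *)
From HB Require Import structures.
From mathcomp Require Import all_boot all_order all_algebra.
From mathcomp Require Import complex.
From mathcomp Require Import all_classical all_reals all_analysis.
Set Implicit Arguments. Unset Strict Implicit. Unset Printing Implicit Defensive.
Import Order.TTheory GRing.Theory Num.Theory.
Local Open Scope ring_scope.

Record network := Network {
  node : finType;
  arrow : finType;
  ntype : node -> nat;
  atype : arrow -> nat;
  head : arrow -> node;
  tail : arrow -> node }.

Section Net.
Variable G : network.

(* b restricted to I(c) is an arrow-type-preserving bijection I(c) -> I(d). *)
Definition input_bij (c d : node G) (b : arrow G -> arrow G) : Prop :=
  (forall a, head a = c -> head (b a) = d /\ atype (b a) = atype a) /\
  (forall a1 a2, head a1 = c -> head a2 = c -> b a1 = b a2 -> a1 = a2) /\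
  (forall a', head a' = d -> exists a, head a = c /\ b a = a').

Definition input_equiv (c d : node G) : Prop :=
  ntype c = ntype d /\ exists b, input_bij c d b.

(* A coloring is given by a color map; same color = same value. *)
Definition balanced (col : node G -> nat) : Prop :=
  forall c d, col c = col d ->
    ntype c = ntype d /\
    exists b, input_bij c d b /\
      forall a, head a = c -> col (tail a) = col (tail (b a)).

(* Node spaces P_c = R^(dim c); the phase space P = prod_c P_c is flattened
   into row vectors indexed by the finite type of coordinates (c, i). *)
Definition coord (dim : node G -> nat) := {c : node G & 'I_(dim c)}.
Definition pdim (dim : node G -> nat) := #|{: coord dim}|.

Section Space.
Variables (R : realType) (dim : node G -> nat).
Local Notation P := 'rV[R]_(pdim dim).

Definition nodeval (x : P) (c : node G) : seq R :=
  [seq x ord0 (enum_rank (existT (fun c => 'I_(dim c)) c i)) | i <- enum 'I_(dim c)].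

(* G-admissibility (differentiability added so that the Jacobian exists). *)
Definition admissible (f : P -> P) : Prop :=
  (forall x, differentiable f x) /\
  (forall c x x', nodeval x c = nodeval x' c ->
     (forall a, head a = c -> nodeval x (tail a) = nodeval x' (tail a)) ->
     nodeval (f x) c = nodeval (f x') c) /\
  (* invariance under input permutations (c = d) and same function for
     input-equivalent nodes, after identifying inputs via b *)
  (forall c d b, ntype c = ntype d -> input_bij c d b ->
     forall x x', nodeval x c = nodeval x' d ->
     (forall a, head a = c -> nodeval x (tail a) = nodeval x' (tail (b a))) ->
     nodeval (f x) c = nodeval (f x') d).

Definition equilibrium (f : P -> P) (y : P) : Prop := f y = 0.

Definition has_synchrony_pattern (col : node G -> nat) (y : P) : Prop :=
  forall c d, nodeval y c = nodeval y d <-> col c = col d.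

Definition linearly_stable (f : P -> P) (y : P) : Prop :=
  forall z : R[i], eigenvalue (map_mx (fun r : R => (r%:C)%C) ('J f y)) z ->
    complex.Re z < 0.
End Space.
End Net.

(* Main.v *)
Require Import Defs.
From HB Require Import structures.
From mathcomp Require Import all_boot all_order all_algebra.
From mathcomp Require Import complex.
From mathcomp Require Import all_classical all_reals all_analysis.
Import Order.TTheory GRing.Theory Num.Theory.
Import numFieldNormedType.Exports.
Local Open Scope ring_scope.

Section Aux.
Variables (R : realType) (n : nat).

Definition mcoord (j : 'I_n) : 'rV[R]_n -> R := fun N => N ord0 j.

Lemma mcoord_lin j : linear (mcoord j).
Proof. by move=> a u v; rewrite /mcoord !mxE. Qed.

HB.instance Definition _ j := GRing.isLinear.Build _ _ _ _ (mcoord j) (mcoord_lin j).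

Lemma is_diff_mcoord (j : 'I_n) (x : 'rV[R]_n) : is_diff x (mcoord j) (mcoord j).
Proof.
apply: DiffDef.
  exact/linear_differentiable/coord_continuous.
by rewrite diff_lin //; apply: coord_continuous.
Qed.

Lemma is_diff_sin (t : R) : is_diff t (@sin R) (fun h => h *: cos t).
Proof.
apply: DiffDef; first exact/derivable1_diffP/derivable_sin.
rewrite deriv1E; last exact: derivable_sin.
by rewrite derive1E derive_val.
Qed.

Definition Fj (j : 'I_n) : 'rV[R]_n -> 'rV[R]_n :=
  ( *:%R^~ ('e_j : 'rV[R]_n)) \o (@sin R \o mcoord j).
Definition dFj (x : 'rV[R]_n) (j : 'I_n) : 'rV[R]_n -> 'rV[R]_n :=
  ( *:%R^~ ('e_j : 'rV[R]_n)) \o ((fun h => h *: cos (x ord0 j)) \o mcoord j).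

Lemma is_diff_Fj x j : is_diff x (Fj j) (dFj x j).
Proof.
apply: is_diff_comp.
exact: (is_diff_comp (is_diff_mcoord j x) (is_diff_sin _)).
Qed.

Definition fsin : 'rV[R]_n -> 'rV[R]_n := \sum_(j < n) Fj j.

Lemma is_diff_fsin x : is_diff x fsin (\sum_(j < n) dFj x j).
Proof.
rewrite /fsin; apply: (big_ind2 (fun f df => is_diff x f df)).
- exact: is_diff_cst.
- by move=> f1 f2 g1 g2 h1 h2; apply: is_diffD.
- by move=> j _; apply: is_diff_Fj.
Qed.

Lemma fsinE x k : fsin x ord0 k = sin (x ord0 k).
Proof.
rewrite /fsin fct_sumE summxE (bigD1 k) //= big1 ?addr0.
  by rewrite /Fj /mcoord /= !mxE !eqxx mulr1.
by move=> j /negPf jk; rewrite /Fj /= !mxE (eq_sym k) jk andbF mulr0.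
Qed.

Lemma fsin_diff (x : 'rV[R]_n) : differentiable fsin x.
Proof. by have [] := is_diff_fsin x. Qed.

Lemma fsin_jac (x : 'rV[R]_n) : (forall k, cos (x ord0 k) = -1) -> 'J fsin x = - 1%:M.
Proof.
move=> hc; rewrite /jacobian (@diff_val _ _ _ _ _ _ _ (is_diff_fsin x)).
apply/matrixP => i j; rewrite !mxE fct_sumE summxE (bigD1 j) //= big1 ?addr0.
  rewrite /dFj /mcoord /= !mxE hc !eqxx /= mulr1 (eq_sym j).
  by case: (i == j); rewrite /= ?scale1r ?scale0r ?mulr1n ?mulr0n ?oppr0.
by move=> k /negPf jk; rewrite /dFj /= !mxE (eq_sym j) jk andbF mulr0.
Qed.

End Aux.

Lemma eig_neg1 (R : realType) m (z : R[i]) :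
  eigenvalue (map_mx (fun r : R => (r%:C)%C) (- 1%:M : 'M[R]_m)) z ->
  complex.Re z < 0.
Proof.
have -> : map_mx (fun r : R => (r%:C)%C) (- 1%:M : 'M[R]_m) = - 1%:M.
  apply/matrixP => i j; rewrite !mxE.
  by case: (i == j); rewrite /= ?mulr1n ?mulr0n ?oppr0 ?rmorphN ?rmorph1 ?rmorph0.
move=> /eigenvalueP [v hv vn0].
move: hv; rewrite mulmxN mulmx1 => hv.
have : (z + 1) *: v = 0 by rewrite scalerDl scale1r -hv addNr.
move/eqP; rewrite scaler_eq0 (negPf vn0) orbF addr_eq0 => /eqP ->.
by rewrite /= ltrN10.
Qed.

Theorem theorem11p1 (R : realType) (G : network) (col : node G -> nat)
  (dim : node G -> nat)
  (hdim_pos : forall c, (0 < dim c)%N)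
  (hdim_eq : forall c d, input_equiv c d -> dim c = dim d) :
  balanced col ->
  exists (f : 'rV[R]_(pdim dim) -> 'rV[R]_(pdim dim)) (y : 'rV[R]_(pdim dim)),
    admissible f /\ equilibrium f y /\ has_synchrony_pattern col y /\
    linearly_stable f y.
Proof.
move=> hbal.
pose v (m : nat) : R := pi + (pi *+ 2) *+ m.
have sinv m : sin (v m) = 0 by rewrite /v (periodicn (@sinD2pi R)) sinpi.
have cosv m : cos (v m) = -1 by rewrite /v (periodicn (@cosD2pi R)) cospi.
have vinj : injective v.
  move=> a b; rewrite /v => /addrI /eqP.
  rewrite -(mulr_natr (pi *+ 2) a) -(mulr_natr (pi *+ 2) b).
  rewrite (inj_eq (mulfI _)); last by rewrite mulrn_eq0 /= gt_eqF // pi_gt0.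
  by rewrite eqr_nat => /eqP.
pose y : 'rV[R]_(pdim dim) := \row_k v (col (tag (enum_val k))).
have nvy c : nodeval y c = nseq (dim c) (v (col c)).
  rewrite /nodeval (eq_map (g := fun=> v (col c))).
    have mc (s : seq 'I_(dim c)) : map (fun=> v (col c)) s = nseq (size s) (v (col c)).
      by elim: s => //= ? ? ->.
    by rewrite mc size_enum_ord.
  by move=> i; rewrite mxE enum_rankK.
have nvf (x : 'rV[R]_(pdim dim)) c : nodeval (@fsin R (pdim dim) x) c = map sin (nodeval x c).
  by rewrite /nodeval -map_comp; apply: eq_map => i /=; rewrite fsinE.
exists (@fsin R (pdim dim)), y; split; [|split; [|split]].
- split; first exact: fsin_diff.
  split.
    by move=> c x x' hc _; rewrite !nvf hc.
  by move=> c d b _ _ x x' hc _; rewrite !nvf hc.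
- apply/rowP => k; rewrite fsinE !mxE; exact: sinv.
- move=> c d; rewrite !nvy; split.
    case: (dim c) (hdim_pos c) => // n _; case: (dim d) (hdim_pos d) => // n' _.
    by case=> /vinj.
  move=> hcd; have [ht [b [hb _]]] := hbal c d hcd.
  by rewrite (hdim_eq c d) ?hcd //; split => //; exists b.
- move=> z; rewrite fsin_jac; first exact: eig_neg1.
  by move=> k; rewrite mxE cosv.
Qed.
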